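(* Let $\Bbbk$ be a field, $H$ a Hopf $\Bbbk$-algebra with bijective antipode, $A$ a left $H$-module $\Bbbk$-algebra, and $P$ a prime ideal of $A$. Put $P\!:\!H = \{ a \in A \mid H.a \subseteq P\}$ (an $H$-prime ideal of $A$). Then there is an embedding of $\Bbbk$-fields $\mathcal{H}_H(P\!:\!H) \hookrightarrow \mathcal{H}(P)$. In particular, if $P$ is rational, then $P\!:\!H$ is $H$-rational.
   Context: A left $H$-module algebra is a $\Bbbk$-algebra $A$ with $1$ that is a left $H$-module via $h\otimes a\mapsto h.a$ such that $h.(ab)=(h_1.a)(h_2.b)$ and $h.1=\varepsilon(h)1$. An $H$-ideal is a two-sided ideal which is an $H$-submodule; then $A/I$ is again an $H$-module algebra. An $H$-ideal $I$ is $H$-prime if $A/I\neq 0$ and the product of any two nonzero $H$-ideals of $A/I$ is nonzero. For a ring $R$, $\operatorname{Q} R$ is its symmetric (Martindale) ring of quotients, $\mathcal{C} R$ the center of $\operatorname{Q} R$ (extended center), and $D_q=\{ r\in R \mid qRr\subseteq R,\ rRq\subseteq R\}$ for $q\in\operatorname{Q} R$. For an $H$-module algebra $B$, $\operatorname{Q}^H B = \{ q \in \operatorname{Q} B \mid h.(dq) = (h.d)q,\ h.(qd) = q(h.d)\ \forall h \in H, d \in D_q \}$ and $\mathcal{C}^H B = \mathcal{C} B\cap \operatorname{Q}^H B$. For $I$ an $H$-prime ideal of $A$, $\mathcal{H}_H(I)=\mathcal{C}^H(A/I)$ (a field), and $I$ is $H$-rational if $\mathcal{H}_H(I)$ is algebraic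 over $\Bbbk$. For a prime ideal $P$, the heart is $\mathcal{H}(P)=\mathcal{C}(A/P)$ (a field), and $P$ is rational if $\mathcal{H}(P)$ is algebraic over $\Bbbk$. *)

(* Defs.v *)
From HB Require Import structures.
From mathcomp Require Import all_boot all_order all_algebra.
Set Implicit Arguments. Unset Strict Implicit. Unset Printing Implicit Defensive.
Import Order.TTheory GRing.Theory.
Local Open Scope ring_scope.

(* An element of H (x) H is represented by a finite formal sum          *)
(* [:: (a1,b1); ...] meaning sum a_i (x) b_i.  Two representatives      *)
(* denote the same tensor iff they agree under every k-bilinear map     *)
(* into every k-vector space (universal property of the tensor product).*)
Section Tensor.
Variables (k : fieldType) (H : algType k).

Definition bilinear_map (V : lmodType k) (b : H -> H -> V) : Prop :=
  (forall c x x' y, b (c *: x + x') y = c *: b x y + b x' y) /\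
  (forall c x y y', b x (c *: y + y') = c *: b x y + b x y').

Definition trilinear_map (V : lmodType k) (b : H -> H -> H -> V) : Prop :=
  [/\ (forall c x x' y z, b (c *: x + x') y z = c *: b x y z + b x' y z),
      (forall c x y y' z, b x (c *: y + y') z = c *: b x y z + b x y' z)
    & (forall c x y z z', b x y (c *: z + z') = c *: b x y z + b x y z')].

Definition tensor2_eq (s t : seq (H * H)) : Prop :=
  forall (V : lmodType k) (b : H -> H -> V), bilinear_map b ->
    \sum_(p <- s) b p.1 p.2 = \sum_(p <- t) b p.1 p.2.

Definition tensor3_eq (s t : seq (H * H * H)) : Prop :=
  forall (V : lmodType k) (b : H -> H -> H -> V), trilinear_map b ->
    \sum_(p <- s) b p.1.1 p.1.2 p.2 = \sum_(p <- t) b p.1.1 p.1.2 p.2.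

Definition is_hopf_algebra (Delta : H -> seq (H * H)) (eps : H -> k)
    (S : H -> H) : Prop :=
  [/\
      (forall c x y, tensor2_eq (Delta (c *: x + y))
                      ([seq (c *: p.1, p.2) | p <- Delta x] ++ Delta y)),
      (forall x y, tensor2_eq (Delta (x * y))
                     [seq (p.1 * q.1, p.2 * q.2) | p <- Delta x, q <- Delta y])
      /\ tensor2_eq (Delta 1) [:: (1, 1)],
      (forall h, tensor3_eq
        [seq (q.1, q.2, p.2) | p <- Delta h, q <- Delta p.1]
        [seq (p.1, q.1, q.2) | p <- Delta h, q <- Delta p.2]),
      [/\ (forall c x y, eps (c *: x + y) = c * eps x + eps y),
          (forall x y, eps (x * y) = eps x * eps y), eps 1 = 1 &
          (forall h, \sum_(p <- Delta h) eps p.1 *: p.2 = h /\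
                     \sum_(p <- Delta h) eps p.2 *: p.1 = h)]
    &
      (forall c x y, S (c *: x + y) = c *: S x + S y) /\
      (forall h, \sum_(p <- Delta h) S p.1 * p.2 = (eps h)%:A /\
                 \sum_(p <- Delta h) p.1 * S p.2 = (eps h)%:A)].

Definition is_module_algebra (Delta : H -> seq (H * H)) (eps : H -> k)
    (A : algType k) (act : H -> A -> A) : Prop :=
  [/\ (forall c h g a, act (c *: h + g) a = c *: act h a + act g a),
      (forall c h a b, act h (c *: a + b) = c *: act h a + act h b),
      (forall h g a, act (h * g) a = act h (act g a)) /\ (forall a, act 1 a = a),
      (forall h a b, act h (a * b) = \sum_(p <- Delta h) act p.1 a * act p.2 b)
    & (forall h, act h 1 = (eps h)%:A)].

End Tensor.

Definition is_ideal (R : nzRingType) (I : R -> Prop) : Prop :=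
  [/\ I 0, (forall x y, I x -> I y -> I (x + y)), (forall x, I x -> I (- x))
    & (forall r x, I x -> I (r * x) /\ I (x * r))].

Definition prime_ideal (R : nzRingType) (P : R -> Prop) : Prop :=
  [/\ is_ideal P, ~ P 1 &
    forall I J, is_ideal I -> is_ideal J ->
      (forall x y, I x -> J y -> P (x * y)) ->
      (forall x, I x -> P x) \/ (forall x, J x -> P x)].

Definition colonH (k : fieldType) (H : algType k) (A : algType k)
    (act : H -> A -> A) (P : A -> Prop) : A -> Prop :=
  fun a => forall h, P (act h a).

Definition H_ideal (k : fieldType) (H : algType k) (B : nzRingType)
    (act : H -> B -> B) (J : B -> Prop) : Prop :=
  is_ideal J /\ forall h x, J x -> J (act h x).

Definition H_prime_algebra (k : fieldType) (H : algType k) (B : nzRingType)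
    (act : H -> B -> B) : Prop :=
  (1 : B) != 0 /\
  forall J K, H_ideal act J -> H_ideal act K ->
    (exists x, J x /\ x != 0) -> (exists y, K y /\ y != 0) ->
    exists x y, [/\ J x, K y & x * y != 0].

(* Symmetric (Martindale) ring of quotients, characterised by its       *)
(* defining properties, w.r.t. the filter of two-sided ideals with zero *)
(* left and right annihilators.                                          *)
Definition dense_ideal (R : nzRingType) (I : R -> Prop) : Prop :=
  [/\ is_ideal I,
      (forall r, (forall x, I x -> r * x = 0) -> r = 0)
    & (forall r, (forall x, I x -> x * r = 0) -> r = 0)].

Definition is_sym_quotient (R Q : nzRingType) (iota : {rmorphism R -> Q})
    : Prop :=
  [/\ injective iota,
      (forall q : Q, exists I, [/\ dense_ideal I,
          (forall x, I x -> exists r, iota x * q = iota r)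
        & (forall x, I x -> exists r, q * iota x = iota r)]),
      (forall (q : Q) I, dense_ideal I ->
          ((forall x, I x -> q * iota x = 0) -> q = 0) /\
          ((forall x, I x -> iota x * q = 0) -> q = 0))
    & forall I (f g : R -> R), dense_ideal I ->
          (forall x y, I x -> I y -> f (x + y) = f x + f y) ->
          (forall x y, I x -> I y -> g (x + y) = g x + g y) ->
          (forall x r, I x -> f (x * r) = f x * r) ->
          (forall x r, I x -> g (r * x) = r * g x) ->
          (forall x y, I x -> I y -> x * f y = g x * y) ->
          exists q : Q, forall x, I x ->
             q * iota x = iota (f x) /\ iota x * q = iota (g x)].

Section Quot.
Variables (R Q : nzRingType) (iota : {rmorphism R -> Q}).

Definition Dq (q : Q) (d : R) : Prop :=
  (forall s, exists t, q * iota s * iota d = iota t) /\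
  (forall s, exists t, iota d * iota s * q = iota t).

(* extended center C R = center of Q R *)
Definition in_center (q : Q) : Prop := forall x, q * x = x * q.

Variables (k : fieldType) (H : algType k) (act : H -> R -> R).

Definition in_QH (q : Q) : Prop :=
  forall h d, Dq q d ->
    (forall t, iota t = iota d * q -> iota (act h t) = iota (act h d) * q) /\
    (forall t, iota t = q * iota d -> iota (act h t) = q * iota (act h d)).

Definition in_CH (q : Q) : Prop := in_center q /\ in_QH q.
End Quot.

Definition algebraic_over (k : fieldType) (Q : nzRingType) (sigma : k -> Q)
    (q : Q) : Prop :=
  exists p : {poly k}, p != 0 /\ \sum_(i < size p) sigma p`_i * q ^+ i = 0.

(* Main.v *)
Require Import Defs.
From HB Require Import structures.
From mathcomp Require Import all_boot all_order all_algebra.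
From Stdlib Require Import Classical ClassicalEpsilon.
Import GRing.Theory.
Local Open Scope ring_scope.
Set Implicit Arguments. Unset Strict Implicit.

Section Main.
Variables (k : fieldType) (H : algType k)
  (Delta : H -> seq (H * H)) (eps : H -> k) (S : H -> H).
Hypothesis hH : is_hopf_algebra Delta eps S.
Variables (A : algType k) (act : H -> A -> A).
Hypothesis hA : is_module_algebra Delta eps act.
Variable (P : A -> Prop).
Hypothesis hP : prime_ideal P.
Variables (B1 : nzRingType) (pi1 : {rmorphism A -> B1}).
Hypothesis pi1_surj : forall b, exists a, pi1 a = b.
Hypothesis pi1_ker : forall a, pi1 a = 0 <-> P a.
Variables (Q1 : nzRingType) (iota1 : {rmorphism B1 -> Q1}).
Hypothesis hQ1 : is_sym_quotient iota1.
Variables (B2 : nzRingType) (pi2 : {rmorphism A -> B2}).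
Hypothesis pi2_surj : forall b, exists a, pi2 a = b.
Hypothesis pi2_ker : forall a, pi2 a = 0 <-> colonH act P a.
Variables (act2 : H -> B2 -> B2).
Hypothesis hact2 : forall h a, act2 h (pi2 a) = pi2 (act h a).
Variables (Q2 : nzRingType) (iota2 : {rmorphism B2 -> Q2}).
Hypothesis hQ2 : is_sym_quotient iota2.

Lemma act0H a : act 0 a = 0.
Proof.
case: hA => linH _ _ _ _.
have := linH 1 0 0 a; rewrite scaler0 addr0 scale1r => e.
by apply: (@addrI _ (act 0 a)); rewrite addr0 -e.
Qed.
Lemma actDH h g a : act (h + g) a = act h a + act g a.
Proof. by case: hA => linH _ _ _ _; have := linH 1 h g a; rewrite !scale1r. Qed.
Lemma actZH c h a : act (c *: h) a = c *: act h a.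
Proof. by case: hA => linH _ _ _ _; have := linH c h 0 a; rewrite !addr0 act0H addr0. Qed.
Lemma actsumH (I : Type) (r : seq I) (F : I -> H) a :
  act (\sum_(i <- r) F i) a = \sum_(i <- r) act (F i) a.
Proof. exact: (big_morph (fun h => act h a) (fun h g => actDH h g a) (act0H a)). Qed.
Lemma act0 h : act h 0 = 0.
Proof.
case: hA => _ linA _ _ _.
have := linA 1 h 0 0; rewrite scaler0 addr0 scale1r => e.
by apply: (@addrI _ (act h 0)); rewrite addr0 -e.
Qed.
Lemma actD h a b : act h (a + b) = act h a + act h b.
Proof. by case: hA => _ linA _ _ _; have := linA 1 h a b; rewrite !scale1r. Qed.
Lemma actZ c h a : act h (c *: a) = c *: act h a.
Proof. by case: hA => _ linA _ _ _; have := linA c h a 0; rewrite !addr0 act0 addr0. Qed.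
Lemma actN h a : act h (- a) = - act h a.
Proof. by rewrite -scaleN1r actZ scaleN1r. Qed.
Lemma actB h a b : act h (a - b) = act h a - act h b.
Proof. by rewrite actD actN. Qed.
Lemma actsum h (I : Type) (r : seq I) (F : I -> A) :
  act h (\sum_(i <- r) F i) = \sum_(i <- r) act h (F i).
Proof. exact: (big_morph (act h) (actD h) (act0 h)). Qed.
Lemma actM h g a : act (h * g) a = act h (act g a).
Proof. by case: hA => _ _ [] . Qed.
Lemma act1 a : act 1 a = a.
Proof. by case: hA => _ _ [] . Qed.
Lemma actMul h a b : act h (a * b) = \sum_(p <- Delta h) act p.1 a * act p.2 b.
Proof. by case: hA. Qed.
Lemma actalg c a : act (c%:A) a = c *: a.
Proof. by rewrite actZH act1. Qed.
Lemma act_algA c h a : act h (c%:A * a) = c%:A * act h a.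
Proof. by rewrite !mulr_algl actZ. Qed.

Lemma idP0 : P 0. Proof. by case: hP => [[]]. Qed.
Lemma idPD x y : P x -> P y -> P (x + y). Proof. by case: hP => [[_ hD _ _] _ _]; apply: hD. Qed.
Lemma idPN x : P x -> P (- x). Proof. by case: hP => [[_ _ hN _] _ _]; apply: hN. Qed.
Lemma idPB x y : P x -> P y -> P (x - y). Proof. by move=> ? ?; apply: idPD => //; apply: idPN. Qed.
Lemma idPMl r x : P x -> P (r * x). Proof. by case: hP => [[_ _ _ h] _ _] px; case: (h r x px). Qed.
Lemma idPMr r x : P x -> P (x * r). Proof. by case: hP => [[_ _ _ h] _ _] px; case: (h r x px). Qed.
Lemma idPsum (I : Type) (r : seq I) (F : I -> A) :
  (forall i, P (F i)) -> P (\sum_(i <- r) F i).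
Proof. by move=> hF; apply: (big_ind P idP0 idPD) => i _; apply: hF. Qed.
Lemma notP1 : ~ P 1. Proof. by case: hP. Qed.

Lemma prime_L (D : A -> Prop) : is_ideal D -> (exists a, D a /\ ~ P a) ->
  forall s, (forall a u, D a -> P (s * u * a)) -> P s.
Proof.
move=> iD [a0 [Da0 nPa0]] s hs.
case: hP => _ _ /(_ (fun y => forall a u, D a -> P (y * u * a)) D).
case.
- split.
  + by move=> a u _; rewrite !mul0r; apply: idP0.
  + by move=> x y hx hy a u Da; rewrite !mulrDl; apply: idPD; [apply: hx|apply: hy].
  + by move=> x hx a u Da; rewrite !mulNr; apply: idPN; apply: hx.
  + move=> r x hx; split.
    * by move=> a u Da; rewrite -!mulrA; apply: idPMl; rewrite !mulrA; apply: hx.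
    * by move=> a u Da; rewrite -(mulrA x r u); apply: hx.
- exact: iD.
- by move=> x y hx Dy; have := hx y 1 Dy; rewrite mulr1.
- by move=> h; apply: h.
- by move=> h; case: nPa0; apply: h.
Qed.

Lemma prime_R (D : A -> Prop) : is_ideal D -> (exists a, D a /\ ~ P a) ->
  forall s, (forall a u, D a -> P (a * u * s)) -> P s.
Proof.
move=> iD [a0 [Da0 nPa0]] s hs.
case: hP => _ _ /(_ D (fun y => forall a u, D a -> P (a * u * y))).
case.
- exact: iD.
- split.
  + by move=> a u _; rewrite !mulr0; apply: idP0.
  + by move=> x y hx hy a u Da; rewrite !mulrDr; apply: idPD; [apply: hx|apply: hy].
  + by move=> x hx a u Da; rewrite !mulrN; apply: idPN; apply: hx.
  + move=> r x hx; split.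
    * by move=> a u Da; rewrite !mulrA -(mulrA a u r); apply: hx.
    * by move=> a u Da; rewrite !mulrA; apply: idPMr; apply: hx.
- by move=> x y Dx hy; have := hy x 1 Dx; rewrite mulr1.
- by move=> h; case: nPa0; apply: h.
- by move=> h; apply: h.
Qed.

Lemma prime_prod (D1 D2 : A -> Prop) : is_ideal D1 -> is_ideal D2 ->
  (exists a, D1 a /\ ~ P a) -> (exists a, D2 a /\ ~ P a) ->
  exists a b, [/\ D1 a, D2 b & ~ P (a * b)].
Proof.
move=> i1 i2 [a [Da nPa]] [b [Db nPb]].
apply: NNPP => hn.
case: hP => _ _ /(_ D1 D2 i1 i2); case.
- move=> x y Dx Dy; apply: NNPP => nP; apply: hn; by exists x, y.
- by move=> h; apply: nPa; apply: h.
- by move=> h; apply: nPb; apply: h.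
Qed.


Local Notation I := (colonH act P).
Local Notation j1 a := (iota1 (pi1 a)).
Local Notation j2 a := (iota2 (pi2 a)).

Lemma I_P a : I a -> P a.
Proof. by move=> /(_ 1); rewrite act1. Qed.
Lemma I_act h a : I a -> I (act h a).
Proof. by move=> ha g; rewrite -actM; apply: ha. Qed.
Lemma I_D a b : I a -> I b -> I (a + b).
Proof. by move=> ha hb h; rewrite actD; apply: idPD. Qed.
Lemma I_B a b : I a -> I b -> I (a - b).
Proof. by move=> ha hb h; rewrite actB; apply: idPB. Qed.
Lemma iota1_inj : injective iota1. Proof. by case: hQ1. Qed.
Lemma iota2_inj : injective iota2. Proof. by case: hQ2. Qed.
Lemma j2_eqI a b : j2 a = j2 b -> I (a - b).
Proof. by move/iota2_inj => e; apply/pi2_ker; rewrite rmorphB e subrr. Qed.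
Lemma j2_eqP a b : j2 a = j2 b -> P (a - b).
Proof. by move/j2_eqI/I_P. Qed.
Lemma j1_eqP a b : j1 a = j1 b -> P (a - b).
Proof. by move/iota1_inj => e; apply/pi1_ker; rewrite rmorphB e subrr. Qed.
Lemma P_j1eq a b : P (a - b) -> j1 a = j1 b.
Proof. by move/pi1_ker; rewrite rmorphB => /eqP; rewrite subr_eq0 => /eqP ->. Qed.
Lemma I_j2eq a b : I (a - b) -> j2 a = j2 b.
Proof. by move/pi2_ker; rewrite rmorphB => /eqP; rewrite subr_eq0 => /eqP ->. Qed.
Lemma j2_j1 a b : j2 a = j2 b -> j1 a = j1 b.
Proof. by move/j2_eqP/P_j1eq. Qed.
Lemma I_j2 a : I a -> j2 a = 0.
Proof. by move/pi2_ker => ->; rewrite rmorph0. Qed.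
Lemma P_j1 a : P a -> j1 a = 0.
Proof. by move/pi1_ker => ->; rewrite rmorph0. Qed.
Lemma j2_0 a : j2 a = 0 -> I a.
Proof. by rewrite -(rmorph0 iota2) => /iota2_inj /pi2_ker. Qed.
Lemma j1_0 a : j1 a = 0 -> P a.
Proof. by rewrite -(rmorph0 iota1) => /iota1_inj /pi1_ker. Qed.

Lemma preim_ideal (J : B2 -> Prop) : is_ideal J -> is_ideal (fun a => J (pi2 a)).
Proof.
case=> J0 JD JN JM; split.
- by rewrite rmorph0.
- by move=> x y hx hy; rewrite rmorphD; apply: JD.
- by move=> x hx; rewrite rmorphN; apply: JN.
- by move=> r x hx; rewrite !rmorphM; apply: JM.
Qed.

Lemma Hprime : H_prime_algebra act2.
Proof.
split; first exact: oner_neq0.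
move=> J K [iJ sJ] [iK sK] [x [Jx x0]] [y [Ky y0]].
have nP (L : B2 -> Prop) z : (forall h x, L x -> L (act2 h x)) -> L z -> z != 0 ->
    exists a, L (pi2 a) /\ ~ P a.
  move=> sL Lz z0; apply: NNPP => hn.
  case: (pi2_surj z) => a ea.
  have : I a.
    move=> h; apply: NNPP => nPh; apply: hn; exists (act h a); split=> //.
    by rewrite -hact2 ea; apply: sL.
  by move/pi2_ker; rewrite ea => e; move: z0; rewrite e eqxx.
have [a [b [Ja Kb nPab]]] := prime_prod (preim_ideal iJ) (preim_ideal iK)
  (nP _ _ sJ Jx x0) (nP _ _ sK Ky y0).
exists (pi2 a), (pi2 b); split=> //.
rewrite -rmorphM; apply/eqP => /pi2_ker /I_P; exact: nPab.
Qed.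


Definition Dd (q : Q2) (a : A) := exists t, j2 a * q = j2 t.

Lemma Dd_ideal q : in_center q -> is_ideal (Dd q).
Proof.
move=> cq; split.
- by exists 0; rewrite !rmorph0 mul0r.
- by move=> x y [t et] [u eu]; exists (t + u); rewrite !rmorphD mulrDl et eu.
- by move=> x [t et]; exists (- t); rewrite !rmorphN mulNr et.
- move=> r x [t et]; split.
  + by exists (r * t); rewrite !rmorphM -mulrA et.
  + by exists (t * r); rewrite !rmorphM -mulrA -cq mulrA et.
Qed.

Lemma Dd_Dq q d : in_center q -> (exists t, iota2 d * q = iota2 t) -> Dq iota2 q d.
Proof.
move=> cq [t et]; split=> s.
- by exists (s * t); rewrite cq -mulrA cq et rmorphM.
- by exists (t * s); rewrite -mulrA -cq mulrA et rmorphM.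
Qed.

Lemma QH_rel q a t h : in_CH iota2 act2 q -> j2 a * q = j2 t ->
  j2 (act h a) * q = j2 (act h t).
Proof.
move=> [cq qh] e.
have [h1 _] := qh h (pi2 a) (Dd_Dq cq (ex_intro _ (pi2 t) e)).
by rewrite -!hact2 (h1 (pi2 t)).
Qed.

Definition Good (q : Q2) := in_center q /\ exists a, Dd q a /\ ~ P a.

Lemma CH_Good q : in_CH iota2 act2 q -> Good q.
Proof.
move=> hq; have cq := hq.1; split=> //.
apply: NNPP => hn.
have hI : forall a, Dd q a -> I a.
  move=> a [t et] h; apply: NNPP => nP; apply: hn; exists (act h a); split=> //.
  by exists (act h t); apply: QH_rel.
case: hQ2 => _ /(_ q) [J [[_ _ ann] hJ _]] _ _.
have : (1 : B2) = 0.
  apply: ann => x Jx; rewrite mulr1.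
  case: (pi2_surj x) => a ea; case: (hJ x Jx) => r er.
  case: (pi2_surj r) => t et.
  have : I a by apply: hI; exists t; rewrite ea et.
  by move/pi2_ker; rewrite ea.
by move/eqP; rewrite oner_eq0.
Qed.

Definition spec (z : Q1) (q : Q2) :=
  forall a t, j2 a * q = j2 t -> z * j1 a = j1 t.

Lemma dense1 (D : A -> Prop) : is_ideal D -> (exists a, D a /\ ~ P a) ->
  dense_ideal (fun x : B1 => exists a, D a /\ pi1 a = x).
Proof.
move=> iD nD; have iD' := iD; case: iD' => D0 DD DN DM; split.
- split.
  + by exists 0; rewrite rmorph0.
  + by move=> _ _ [a [Da <-]] [b [Db <-]]; exists (a + b); rewrite rmorphD; split=> //; apply: DD.
  + by move=> _ [a [Da <-]]; exists (- a); rewrite rmorphN; split=> //; apply: DN.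
  + move=> r _ [a [Da <-]]; case: (pi1_surj r) => r' <-; split.
    * by exists (r' * a); rewrite rmorphM; split=> //; case: (DM r' a Da).
    * by exists (a * r'); rewrite rmorphM; split=> //; case: (DM r' a Da).
- move=> r hr; case: (pi1_surj r) => s es.
  have : P s.
    apply: (prime_L iD nD) => a u Da; apply/pi1_ker.
    rewrite !rmorphM es -mulrA -rmorphM; apply: hr.
    by exists (u * a); split; [case: (DM u a Da)|].
  by move/pi1_ker; rewrite es.
- move=> r hr; case: (pi1_surj r) => s es.
  have : P s.
    apply: (prime_R iD nD) => a u Da; apply/pi1_ker.
    rewrite !rmorphM es -rmorphM; apply: hr.
    by exists (a * u); split; [case: (DM u a Da)|].
  by move/pi1_ker; rewrite es.
Qed.

Lemma killer (D : A -> Prop) : is_ideal D -> (exists a, D a /\ ~ P a) ->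
  forall z, (forall a, D a -> z * j1 a = 0) -> z = 0.
Proof.
move=> iD nD z hz; case: hQ1 => _ _ /(_ z _ (dense1 iD nD)) [h _] _.
by apply: h => _ [a [Da <-]]; apply: hz.
Qed.

Lemma spec_unique q z1 z2 : Good q -> spec z1 q -> spec z2 q -> z1 = z2.
Proof.
move=> [cq nD] s1 s2; apply/eqP; rewrite -subr_eq0; apply/eqP.
apply: (killer (Dd_ideal cq) nD) => a [t et].
by rewrite mulrBl (s1 _ _ et) (s2 _ _ et) subrr.
Qed.

Lemma WD q d u : Good q -> P d -> j2 d * q = j2 u -> P u.
Proof.
move=> [cq nD] Pd eu.
apply: (prime_L (Dd_ideal cq) nD) => x r [v ev].
have e : j2 (u * r * x) = j2 (d * r * v).
  by rewrite !rmorphM -eu -!mulrA cq -!mulrA ev.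
have := j2_eqP e => h.
have -> : u * r * x = (u * r * x - d * r * v) + d * r * v by rewrite subrK.
by apply: idPD => //; apply: idPMr; apply: idPMr.
Qed.

Lemma spec_exists q : Good q -> exists z, spec z q.
Proof.
move=> gq; have [cq nD] := gq.
pose F (b : B1) := epsilon (inhabits 0)
  (fun y => exists a t, [/\ pi1 a = b, j2 a * q = j2 t & pi1 t = y]).
have Fs : forall a t, j2 a * q = j2 t -> F (pi1 a) = pi1 t.
  move=> a t et.
  have := epsilon_spec (inhabits 0)
    (fun y => exists a' t', [/\ pi1 a' = pi1 a, j2 a' * q = j2 t' & pi1 t' = y])
    (ex_intro _ (pi1 t) (ex_intro _ a (ex_intro _ t (And3 erefl et erefl)))).
  rewrite -/(F (pi1 a)).
  move=> [a' [t' [ea et' <-]]].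
  have Pa : P (a' - a) by apply/pi1_ker; rewrite rmorphB ea subrr.
  have : P (t' - t).
    by apply: (WD gq Pa); rewrite !rmorphB mulrBl et et'.
  by move/pi1_ker; rewrite rmorphB => /eqP; rewrite subr_eq0 => /eqP.
have iD := Dd_ideal cq; case: (iD) => D0 DD DN DM.
case: hQ1 => _ _ _ /(_ _ F F (dense1 iD nD)).
case.
- move=> _ _ [a [[t et] <-]] [b [[u eu] <-]].
  rewrite -rmorphD (Fs _ _ et) (Fs _ _ eu) -rmorphD; apply: Fs.
  by rewrite !rmorphD mulrDl et eu.
- move=> _ _ [a [[t et] <-]] [b [[u eu] <-]].
  rewrite -rmorphD (Fs _ _ et) (Fs _ _ eu) -rmorphD; apply: Fs.
  by rewrite !rmorphD mulrDl et eu.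
- move=> _ r [a [[t et] <-]]; case: (pi1_surj r) => r' <-.
  rewrite -rmorphM (Fs _ _ et) -rmorphM; apply: Fs.
  by rewrite !rmorphM -mulrA -cq mulrA et.
- move=> _ r [a [[t et] <-]]; case: (pi1_surj r) => r' <-.
  rewrite -rmorphM (Fs _ _ et) -rmorphM; apply: Fs.
  by rewrite !rmorphM -mulrA et.
- move=> _ _ [a [[t et] <-]] [b [[u eu] <-]].
  rewrite (Fs _ _ et) (Fs _ _ eu) -!rmorphM.
  apply/eqP; rewrite -subr_eq0 -rmorphB; apply/eqP; apply/pi1_ker.
  apply: j2_eqP; rewrite !rmorphM -eu -et -!mulrA; congr (_ * _); by rewrite cq.
- move=> z hz; exists z => a t et.
  have Da : Dd q a by exists t.
  by have [-> _] := hz (pi1 a) (ex_intro _ a (conj Da erefl)); rewrite (Fs _ _ et).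
Qed.

Definition phi (q : Q2) : Q1 := epsilon (inhabits 0) (fun z => spec z q).

Lemma phi_spec q : Good q -> spec (phi q) q.
Proof. by move=> gq; exact: (epsilon_spec (inhabits 0) (fun z => spec z q) (spec_exists gq)). Qed.

Lemma phi_unique q z : Good q -> spec z q -> phi q = z.
Proof. by move=> gq sz; apply: (spec_unique gq) => //; apply: phi_spec. Qed.


Lemma phi_central q : Good q -> in_center (phi q).
Proof.
move=> gq y; have [cq nD] := gq; have sp := phi_spec gq.
case: hQ1 => _ /(_ y) [J [dJ _ hJ]] kill _.
apply/eqP; rewrite -subr_eq0; apply/eqP.
have [h _] := kill (phi q * y - y * phi q) J dJ; apply: h => x Jx.
case: (pi1_surj x) => u eu; case: (hJ x Jx) => w' ew; case: (pi1_surj w') => w ew'.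
apply: (killer (Dd_ideal cq) nD) => a [t et].
have T1 : phi q * y * iota1 x * j1 a = j1 (w * t).
  rewrite -(mulrA (phi q)) ew -ew' -mulrA -!rmorphM.
  by apply: sp; rewrite !rmorphM -mulrA et.
have T2 : y * phi q * iota1 x * j1 a = j1 (w * t).
  rewrite -(mulrA y) -(mulrA y) -(mulrA (phi q)) -eu -!rmorphM.
  rewrite (sp (u * a) (u * t)); last by rewrite !rmorphM -mulrA et.
  by rewrite !rmorphM mulrA eu ew -ew' -!rmorphM.
by rewrite mulrBl mulrBl T1 T2 subrr.
Qed.

Lemma rep_add q q' a b t t' : in_center q -> j2 a * q = j2 t -> j2 b * q' = j2 t' ->
  j2 (a * b) * (q + q') = j2 (t * b + a * t').
Proof.
move=> cq et et'.
rewrite mulrDr.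
have -> : j2 (a * b) * q = j2 (t * b) by rewrite !rmorphM -mulrA -cq mulrA et.
have -> : j2 (a * b) * q' = j2 (a * t') by rewrite !rmorphM -mulrA et'.
by rewrite !rmorphD.
Qed.

Lemma rep_mul q q' a b t t' : in_center q -> j2 a * q = j2 t -> j2 b * q' = j2 t' ->
  j2 (a * b) * (q * q') = j2 (t * t').
Proof.
move=> cq et et'.
have -> : j2 (a * b) * (q * q') = j2 (t * b) * q'.
  by rewrite !rmorphM mulrA -(mulrA (j2 a)) -cq mulrA et.
by rewrite !rmorphM -mulrA et'.
Qed.

Lemma Good_add q q' : Good q -> Good q' -> Good (q + q').
Proof.
move=> [cq nD] [cq' nD']; split.
  by move=> x; rewrite mulrDl mulrDr cq cq'.
have [a [b [[t et] [t' et'] nab]]] := prime_prod (Dd_ideal cq) (Dd_ideal cq') nD nD'.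
by exists (a * b); split=> //; exists (t * b + a * t'); apply: rep_add.
Qed.

Lemma Good_mul q q' : Good q -> Good q' -> Good (q * q').
Proof.
move=> [cq nD] [cq' nD']; split.
  by move=> x; rewrite -mulrA cq' mulrA cq mulrA.
have [a [b [[t et] [t' et'] nab]]] := prime_prod (Dd_ideal cq) (Dd_ideal cq') nD nD'.
by exists (a * b); split=> //; exists (t * t'); apply: rep_mul.
Qed.

Lemma killer2 q q' z : Good q -> Good q' ->
  (forall a b, Dd q a -> Dd q' b -> z * j1 a * j1 b = 0) -> z = 0.
Proof.
move=> [cq nD] [cq' nD'] h.
apply: (killer (Dd_ideal cq) nD) => a Da.
by apply: (killer (Dd_ideal cq') nD') => b Db; apply: h.
Qed.

Lemma phi_add q q' : Good q -> Good q' -> phi (q + q') = phi q + phi q'.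
Proof.
move=> gq gq'; apply/eqP; rewrite -subr_eq0; apply/eqP.
apply: (killer2 gq gq') => a b [t et] [t' et'].
have T1 : phi (q + q') * j1 a * j1 b = j1 (t * b + a * t').
  by rewrite -mulrA -!rmorphM (phi_spec (Good_add gq gq') (rep_add gq.1 et et')).
have T2 : phi q * j1 a * j1 b = j1 t * j1 b by rewrite (phi_spec gq et).
have T3 : phi q' * j1 a * j1 b = j1 a * j1 t'.
  by rewrite (phi_central gq') -mulrA (phi_spec gq' et').
by rewrite !mulrBl !mulrDl T1 T2 T3 !rmorphD !rmorphM subrr.
Qed.

Lemma phi_mul q q' : Good q -> Good q' -> phi (q * q') = phi q * phi q'.
Proof.
move=> gq gq'; apply/eqP; rewrite -subr_eq0; apply/eqP.
apply: (killer2 gq gq') => a b [t et] [t' et'].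
have T1 : phi (q * q') * j1 a * j1 b = j1 (t * t').
  by rewrite -mulrA -!rmorphM (phi_spec (Good_mul gq gq') (rep_mul gq.1 et et')).
have T2 : phi q * phi q' * j1 a * j1 b = j1 t * j1 t'.
  rewrite -(mulrA (phi q)) (phi_central gq') mulrA (phi_spec gq et).
  by rewrite -mulrA (phi_spec gq' et').
by rewrite !mulrBl T1 T2 !rmorphM subrr.
Qed.

Lemma central_iota2 (r : B2) : (forall x, r * x = x * r) -> in_center (iota2 r).
Proof.
move=> cr y; case: hQ2 => _ /(_ y) [J [dJ _ hJ]] kill _.
apply/eqP; rewrite -subr_eq0; apply/eqP.
have [h _] := kill (iota2 r * y - y * iota2 r) J dJ; apply: h => x Jx.
case: (hJ x Jx) => s es.
have T1 : iota2 r * y * iota2 x = iota2 (r * s) by rewrite -mulrA es rmorphM.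
have T2 : y * iota2 r * iota2 x = iota2 (r * s).
  by rewrite -mulrA -rmorphM cr rmorphM mulrA es -rmorphM cr.
by rewrite mulrBl T1 T2 subrr.
Qed.

Lemma phi_scalar c : phi (j2 (c%:A)) = j1 (c%:A).
Proof.
have cc : in_center (j2 (c%:A)).
  apply: central_iota2 => x; case: (pi2_surj x) => a <-.
  by rewrite -!rmorphM mulr_algl mulr_algr.
have g : Good (j2 (c%:A)).
  split=> //; exists 1; split; last exact: notP1.
  by exists (c%:A); rewrite !rmorph1 mul1r.
apply: phi_unique => // a t et.
rewrite -!rmorphM; apply: j2_j1; rewrite -et -!rmorphM.
by rewrite mulr_algl mulr_algr.
Qed.

Lemma phi_one : phi 1 = 1.
Proof.
have := phi_scalar 1; rewrite scale1r !rmorph1 => ->; done.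
Qed.

Lemma phi_inj q q' : in_CH iota2 act2 q -> in_CH iota2 act2 q' -> phi q = phi q' -> q = q'.
Proof.
move=> hq hq' e.
have gq := CH_Good hq; have gq' := CH_Good hq'.
have st : forall x t t', j2 x * q = j2 t -> j2 x * q' = j2 t' -> j2 t = j2 t'.
  move=> x t t' et et'; apply: I_j2eq => h; rewrite actB; apply: j1_eqP.
  rewrite -(phi_spec gq (QH_rel h hq et)) -(phi_spec gq' (QH_rel h hq' et')).
  by rewrite e.
case: hQ2 => _ hd kill _.
have [J [dJ hJ _]] := hd q; have [J' [dJ' hJ' _]] := hd q'.
apply/eqP; rewrite -subr_eq0; apply/eqP.
have [k1 _] := kill (q - q') J dJ; apply: k1 => x Jx.
have [k2 _] := kill ((q - q') * iota2 x) J' dJ'; apply: k2 => y Jy.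
case: (pi2_surj x) => a ea; case: (pi2_surj y) => b eb.
case: (hJ x Jx) => r er; case: (pi2_surj r) => t et.
case: (hJ' y Jy) => r' er'; case: (pi2_surj r') => t' et'.
rewrite -ea -eb in er er' *; rewrite -et in er; rewrite -et' in er'.
have e1 : j2 (a * b) * q = j2 (t * b).
  by rewrite !rmorphM -mulrA -hq.1 mulrA er.
have e2 : j2 (a * b) * q' = j2 (a * t').
  by rewrite !rmorphM -mulrA er'.
have T1 : q * j2 a * j2 b = j2 (t * b) by rewrite -mulrA -!rmorphM hq.1 e1.
have T2 : q' * j2 a * j2 b = j2 (a * t') by rewrite -mulrA -!rmorphM hq'.1 e2.
by rewrite !mulrBl T1 T2 (st _ _ _ e1 e2) subrr.
Qed.


Lemma antipode_formula h u e :
  act h u * e = \sum_(p <- Delta h) act p.1 (u * act (S p.2) e).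
Proof.
case: hH => _ _ coass [_ _ _ counit] [Slin anti].
pose b (x y z : H) : A := act x u * act (y * S z) e.
have tb : trilinear_map b.
  split.
  - move=> c x x' y z; rewrite /b.
    case: hA => linH _ _ _ _; by rewrite linH mulrDl -scalerAl.
  - move=> c x y y' z; rewrite /b.
    case: hA => linH _ _ _ _; by rewrite mulrDl -scalerAl linH mulrDr -scalerAr.
  - move=> c x y z z'; rewrite /b.
    case: hA => linH _ _ _ _; by rewrite Slin mulrDr -scalerAr linH mulrDr -scalerAr.
have := coass h A b tb.
rewrite !big_allpairs_dep /= => E.
transitivity (\sum_(p <- Delta h) \sum_(q <- Delta p.1) b q.1 q.2 p.2); last first.
  apply: eq_bigr => p _; rewrite actMul; apply: eq_bigr => q _.
  by rewrite /b actM.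
rewrite E.
transitivity (\sum_(p <- Delta h) (eps p.2 *: act p.1 u) * e); last first.
  apply: eq_bigr => p _; rewrite /b -mulr_sumr -actsumH (anti p.2).2 actalg.
  by rewrite -scalerAl scalerAr.
rewrite -mulr_suml; congr (_ * _); rewrite -{1}((counit h).2) actsumH.
by apply: eq_bigr => p _; rewrite actZH.
Qed.

Definition Rel (q : Q2) (i : nat) (e s : A) := forall h,
  j2 (act h e) * q ^+ i = j2 (act h s) /\ j1 (act h e) * phi q ^+ i = j1 (act h s).

Lemma R0 q e : Rel q 0 e e.
Proof. by move=> h; rewrite !expr0 !mulr1. Qed.

Lemma R1 q a t : in_CH iota2 act2 q -> j2 a * q = j2 t -> Rel q 1 a t.
Proof.
move=> hq et h; rewrite !expr1; have e := QH_rel h hq et; split=> //.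
by rewrite -(phi_central (CH_Good hq)); exact: (phi_spec (CH_Good hq) e).
Qed.

Lemma comm_split (R : nzRingType) (z X Y : R) m n : (forall x, z * x = x * z) ->
  X * Y * z ^+ (m + n) = X * z ^+ m * (Y * z ^+ n).
Proof.
move=> cz; have cm : GRing.comm Y (z ^+ m).
  by apply: commrX; rewrite /GRing.comm cz.
by rewrite exprD -!mulrA; congr (_ * _); rewrite !mulrA cm.
Qed.

Lemma Rmul q m n e s e' s' : Good q -> Rel q m e s -> Rel q n e' s' ->
  Rel q (m + n) (e * e') (s * s').
Proof.
move=> gq r r' h; rewrite !actMul; split.
- rewrite !rmorph_sum !mulr_suml; apply: eq_bigr => p _.
  rewrite !rmorphM (comm_split _ _ _ _ gq.1) (r p.1).1 (r' p.2).1.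
  done.
- rewrite !rmorph_sum !mulr_suml; apply: eq_bigr => p _.
  rewrite !rmorphM (comm_split _ _ _ _ (phi_central gq)) (r p.1).2 (r' p.2).2.
  done.
Qed.

Lemma Radd q i e s e' s' : Rel q i e s -> Rel q i e' s' -> Rel q i (e + e') (s + s').
Proof.
move=> r r' h; rewrite !actD !rmorphD !mulrDl (r h).1 (r h).2 (r' h).1 (r' h).2.
done.
Qed.

Lemma Rneg q i e s : Rel q i e s -> Rel q i (- e) (- s).
Proof. by move=> r h; rewrite !actN !rmorphN !mulNr (r h).1 (r h).2. Qed.

Lemma Rzero q i : Rel q i 0 0.
Proof. by move=> h; rewrite !act0 !rmorph0 !mul0r. Qed.

Lemma Ract q i g e s : Rel q i e s -> Rel q i (act g e) (act g s).
Proof. by move=> r h; rewrite -!actM; apply: r. Qed.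

Definition Adm q n e := forall i, (i <= n)%N -> exists s, Rel q i e s.

Lemma Adm_ideal q n : Good q -> is_ideal (Adm q n).
Proof.
move=> gq; split.
- by move=> i _; exists 0; apply: Rzero.
- move=> x y hx hy i hi; case: (hx i hi) => s rs; case: (hy i hi) => s' rs'.
  by exists (s + s'); apply: Radd.
- by move=> x hx i hi; case: (hx i hi) => s rs; exists (- s); apply: Rneg.
- move=> r x hx; split=> i hi; case: (hx i hi) => s rs.
  + by exists (r * s); have := Rmul gq (R0 q r) rs.
  + by exists (s * r); have := Rmul gq rs (R0 q r); rewrite addn0.
Qed.

Lemma Adm_act q n g e : Adm q n e -> Adm q n (act g e).
Proof. by move=> he i hi; case: (he i hi) => s rs; exists (act g s); apply: Ract. Qed.

Lemma Adm_nP q : in_CH iota2 act2 q -> forall n, exists e, Adm q n e /\ ~ P e.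
Proof.
move=> hq; have gq := CH_Good hq; elim=> [|n [e [ae ne]]].
  exists 1; split; last exact: notP1.
  by move=> i; rewrite leqn0 => /eqP ->; exists 1; apply: R0.
have [a [b [[t et] Ab nab]]] := prime_prod (Dd_ideal gq.1) (Adm_ideal n gq) gq.2
  (ex_intro _ e (conj ae ne)).
exists (a * b); split=> // -[|i] hi.
  by exists (a * b); apply: R0.
case: (Ab i hi) => s rs; exists (t * s).
exact: (Rmul gq (R1 hq et) rs).
Qed.

Lemma annih (D : A -> Prop) u : is_ideal D -> (exists a, D a /\ ~ P a) ->
  (forall g e, D e -> D (act g e)) -> (forall e, D e -> I (u * e)) -> I u.
Proof.
move=> iD nD sD hu h.
apply: (prime_L iD nD) => e r De.
rewrite -mulrA antipode_formula; apply: idPsum => p.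
apply: hu; apply: sD; case: iD => _ _ _ /(_ r e De) [].
done.
Qed.

Lemma rational q (p : {poly k}) : in_CH iota2 act2 q ->
  \sum_(i < size p) j1 ((p`_i)%:A) * phi q ^+ i = 0 ->
  \sum_(i < size p) j2 ((p`_i)%:A) * q ^+ i = 0.
Proof.
move=> hq hp; have gq := CH_Good hq.
set N := size p; set w := \sum_(i < N) _.
have kill : forall e, Adm q N e -> w * j2 e = 0.
  move=> e ae.
  pose s (i : nat) := epsilon (inhabits 0) (fun s => Rel q i e s).
  have rs : forall i : 'I_N, Rel q i e (s i).
    move=> i; apply: (epsilon_spec (inhabits 0) (fun s => Rel q i e s)).
    by apply: ae; apply: ltnW.
  pose T := \sum_(i < N) (p`_i)%:A * s i.
  have c1 : w * j2 e = j2 T.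
    rewrite /w /T mulr_suml !rmorph_sum; apply: eq_bigr => i _.
    rewrite -mulrA -(commrX i (esym (gq.1 (j2 e)))) !rmorphM.
    by have := (rs i 1).1; rewrite !act1 => ->.
  have c2 : I T.
    move=> h; apply: j1_0; rewrite /T actsum !rmorph_sum.
    transitivity (j1 (act h e) * \sum_(i < N) j1 ((p`_i)%:A) * phi q ^+ i);
      last by rewrite hp mulr0.
    rewrite mulr_sumr; apply: eq_bigr => i _.
    rewrite act_algA !rmorphM -(rs i h).2 !mulrA; congr (_ * _).
    by rewrite -!rmorphM mulr_algl mulr_algr.
  by rewrite c1; apply: I_j2.
case: hQ2 => _ /(_ w) [J [dJ _ hJ]] kl _.
have [k1 _] := kl w J dJ; apply: k1 => x Jx.
case: (hJ x Jx) => r er; case: (pi2_surj x) => x' ex; case: (pi2_surj r) => u eu.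
rewrite er -eu; apply: I_j2.
have [e0 [ae0 ne0]] := Adm_nP hq N.
apply: (annih (Adm_ideal N gq) (ex_intro _ e0 (conj ae0 ne0))).
  by move=> g e; apply: Adm_act.
move=> e ae; apply: j2_0.
rewrite !rmorphM eu -er -ex -mulrA -!rmorphM; apply: kill.
by case: (Adm_ideal N gq) => _ _ _ /(_ x' e ae) [].
Qed.


Lemma main :
  H_prime_algebra act2 /\
  (exists phi : Q2 -> Q1,
     [/\ forall q, in_CH iota2 act2 q -> in_center (phi q),
         forall q q', in_CH iota2 act2 q -> in_CH iota2 act2 q' ->
           phi (q + q') = phi q + phi q' /\ phi (q * q') = phi q * phi q',
         phi 1 = 1,
         forall c : k, phi (iota2 (pi2 c%:A)) = iota1 (pi1 c%:A)
       & forall q q', in_CH iota2 act2 q -> in_CH iota2 act2 q' ->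
           phi q = phi q' -> q = q']) /\
  ((forall q, in_center q ->
      algebraic_over (fun c : k => iota1 (pi1 c%:A)) q) ->
   forall q, in_CH iota2 act2 q ->
      algebraic_over (fun c : k => iota2 (pi2 c%:A)) q).
Proof.
split; first exact: Hprime.
split.
  exists phi; split.
  - by move=> q hq; apply: phi_central; apply: CH_Good.
  - by move=> q q' hq hq'; split; [apply: phi_add|apply: phi_mul]; apply: CH_Good.
  - exact: phi_one.
  - exact: phi_scalar.
  - exact: phi_inj.
move=> hrat q hq.
have [p [p0 hp]] := hrat _ (phi_central (CH_Good hq)).
by exists p; split=> //; apply: rational.
Qed.

End Main.

Unset Implicit Arguments. Set Strict Implicit.

Theorem proposition3p1
  (k : fieldType) (H : algType k)
  (Delta : H -> seq (H * H)) (eps : H -> k) (S : H -> H)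
  (hH : is_hopf_algebra Delta eps S) (hS : bijective S)
  (A : algType k) (act : H -> A -> A) (hA : is_module_algebra Delta eps act)
  (P : A -> Prop) (hP : prime_ideal P)
  (* B1 = A/P, Q1 = Q(A/P) *)
  (B1 : nzRingType) (pi1 : {rmorphism A -> B1})
  (pi1_surj : forall b, exists a, pi1 a = b)
  (pi1_ker : forall a, pi1 a = 0 <-> P a)
  (Q1 : nzRingType) (iota1 : {rmorphism B1 -> Q1})
  (hQ1 : is_sym_quotient iota1)
  (* B2 = A/(P:H) with the induced H-action, Q2 = Q(A/(P:H)) *)
  (B2 : nzRingType) (pi2 : {rmorphism A -> B2})
  (pi2_surj : forall b, exists a, pi2 a = b)
  (pi2_ker : forall a, pi2 a = 0 <-> colonH act P a)
  (act2 : H -> B2 -> B2) (hact2 : forall h a, act2 h (pi2 a) = pi2 (act h a))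
  (Q2 : nzRingType) (iota2 : {rmorphism B2 -> Q2})
  (hQ2 : is_sym_quotient iota2) :
  (* P:H is H-prime *)
  H_prime_algebra act2 /\
  (* embedding of k-fields H_H(P:H) = C^H(A/(P:H)) into H(P) = C(A/P) *)
  (exists phi : Q2 -> Q1,
     [/\ forall q, in_CH iota2 act2 q -> in_center (phi q),
         forall q q', in_CH iota2 act2 q -> in_CH iota2 act2 q' ->
           phi (q + q') = phi q + phi q' /\ phi (q * q') = phi q * phi q',
         phi 1 = 1,
         forall c : k, phi (iota2 (pi2 c%:A)) = iota1 (pi1 c%:A)
       & forall q q', in_CH iota2 act2 q -> in_CH iota2 act2 q' ->
           phi q = phi q' -> q = q']) /\
  (* P rational  ==>  P:H is H-rational *)
  ((forall q, in_center q ->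
      algebraic_over (fun c : k => iota1 (pi1 c%:A)) q) ->
   forall q, in_CH iota2 act2 q ->
      algebraic_over (fun c : k => iota2 (pi2 c%:A)) q).
Proof.
by eapply main; eassumption.
Qed.
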